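(* Let $k\ge1$ and work in $\mathbb{R}^{2k}$ with standard basis $e_1,\dots,e_{2k}$. Define polytopes \[ P_{2\ell}=\mathrm{Conv}\{0,\ \ell e_2,\ell e_4,\dots,\ell e_{2k},\ 2\ell e_1,2\ell e_3,\dots,2\ell e_{2k-1}\},\quad \ell\ge1, \] \[ P_{i}=\mathrm{Conv}\{0,\ \tfrac{i-1}{2} e_2,\dots,\tfrac{i-1}{2} e_{2k},\ i e_1,i e_3,\dots,i e_{2k-1}\},\quad i\ge1 \text{ odd}, \] and line segments $Q_{2\ell-1}=\mathrm{Conv}\{0,(2\ell-1)e_{2\ell-1}\}$, $Q_{2\ell}=\mathrm{Conv}\{0,\ell e_{2\ell}\}$ for $\ell\in[k]$. For every nonzero $w\in\mathbb{R}^{2k}$, the set \[ \mathcal I_w=\{i\in[2k]:\ Q_i\cap \mathrm{Init}_w(P_i)\neq\emptyset\} \] is nonempty.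
   Context: For $w\in\mathbb{R}^n$ and a convex polytope $P\subset\mathbb{R}^n$, $\mathrm{Init}_w(P)=\{x\in P:\langle w,x\rangle\le\langle w,y\rangle \text{ for all } y\in P\}$ is the face of $P$ on which the linear functional $x\mapsto\langle w,x\rangle$ attains its minimum. (The polytopes $P_i$ are the Newton polytopes, in the variable order $(\mu_1,s_1,\dots,\mu_k,s_k)$, of the $i$-th moment equation $\sum_\ell\bar\lambda_\ell M_i(\mu_\ell,s_\ell)-\bar m_i$ of a $k$-component univariate Gaussian mixture with known weights.) *)

(* Defs.v *)
From HB Require Import structures.
From mathcomp Require Import all_boot all_order all_algebra.
From mathcomp Require Import reals.
Set Implicit Arguments. Unset Strict Implicit. Unset Printing Implicit Defensive.
Import Order.TTheory GRing.Theory Num.Theory.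
Local Open Scope ring_scope.

Section Defs.
Variable R : realType.

(* standard basis vector: unitv j = e_{j+1} (ordinals are 0-based) *)
Definition unitv n (j : 'I_n) : 'rV[R]_n := \row_(m < n) (m == j)%:R.

Definition dotv n (w x : 'rV[R]_n) : R := \sum_(j < n) w 0 j * x 0 j.

Definition conv n (S : seq 'rV[R]_n) (x : 'rV[R]_n) : Prop :=
  exists lam : 'I_(size S) -> R,
    [/\ forall j, 0 <= lam j, \sum_(j < size S) lam j = 1
      & x = \sum_(j < size S) lam j *: S`_j].

Definition Init n (w : 'rV[R]_n) (P : 'rV[R]_n -> Prop) (x : 'rV[R]_n) : Prop :=
  P x /\ forall y, P y -> dotv w x <= dotv w y.

(* Vertex sets. For a (1-based) index i, e_{2m} is unitv at the odd 0-based
   ordinal 2m-1, and e_{2m-1} is unitv at the even 0-based ordinal 2m-2. *)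
Definition Ppts (k i : nat) : seq 'rV[R]_(2 * k) :=
  let c := if odd i then ((i.-1) %/ 2)%N else (i %/ 2)%N in
  0 :: [seq c%:R *: unitv j | j <- [seq j : 'I_(2 * k) <- enum 'I_(2 * k) | odd j]]
    ++ [seq i%:R *: unitv j | j <- [seq j : 'I_(2 * k) <- enum 'I_(2 * k) | ~~ odd j]].

Definition Ppol (k i : nat) : 'rV[R]_(2 * k) -> Prop := conv (Ppts k i).

(* Q_i for i in [2k], given by its 0-based ordinal j (i = j+1):
   Q_{2l-1} = Conv{0, (2l-1) e_{2l-1}},  Q_{2l} = Conv{0, l e_{2l}} *)
Definition Qseg (k : nat) (j : 'I_(2 * k)) : 'rV[R]_(2 * k) -> Prop :=
  let i := j.+1 in
  conv [:: 0; (if odd i then i%:R else (i %/ 2)%N%:R) *: unitv j].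

End Defs.

(* Main.v *)
Require Import Defs.
From HB Require Import structures.
From mathcomp Require Import all_boot all_order all_algebra.
From mathcomp Require Import reals.
From mathcomp Require Import ring lra.
Import Order.TTheory GRing.Theory Num.Theory.
Local Open Scope ring_scope.

Section Helpers.
Variable R : realType.

Lemma ex_argmin n (P : pred 'I_n) (f : 'I_n -> R) j0 : P j0 ->
  exists2 a, P a & forall m, P m -> f a <= f m.
Proof.
move=> Pj0; case: (@arg_minP _ _ _ j0 P f Pj0) => a Pa Ha.
by exists a.
Qed.

Lemma dotv_sum n (w : 'rV[R]_n) m (lam : 'I_m -> R) (S : 'I_m -> 'rV[R]_n) :
  dotv w (\sum_(j < m) lam j *: S j) = \sum_(j < m) lam j * dotv w (S j).
Proof.
rewrite /dotv.
under eq_bigr => i _ do rewrite summxE big_distrr /=.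
rewrite exchange_big /=; apply: eq_bigr => j _.
rewrite big_distrr /=; apply: eq_bigr => i _; rewrite mxE; ring.
Qed.

Lemma dotv_unit n (w : 'rV[R]_n) (s : R) (j : 'I_n) :
  dotv w (s *: unitv R j) = s * w 0 j.
Proof.
rewrite /dotv (bigD1 j) //= big1 ?addr0.
  by rewrite !mxE eqxx mulr1 mulrC.
by move=> i /negbTE Hi; rewrite !mxE Hi mulr0 mulr0.
Qed.

Lemma dotv0 n (w : 'rV[R]_n) : dotv w 0 = 0.
Proof. by rewrite /dotv big1 // => i _; rewrite mxE mulr0. Qed.

Lemma conv_mem n (S : seq 'rV[R]_n) x : x \in S -> conv S x.
Proof.
move=> xS; have Hi : (index x S < size S)%N by rewrite index_mem.
exists (fun j : 'I_(size S) => (j == Ordinal Hi)%:R); split.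
- by move=> j; rewrite ler0n.
- rewrite (bigD1 (Ordinal Hi)) //= eqxx big1 ?addr0 //.
  by move=> j /negbTE ->.
- rewrite (bigD1 (Ordinal Hi)) //= eqxx big1 ?addr0 ?scale1r ?nth_index //.
  by move=> j /negbTE ->; rewrite scale0r.
Qed.

Lemma init_of n (w : 'rV[R]_n) (S : seq 'rV[R]_n) x : x \in S ->
  (forall p, p \in S -> dotv w x <= dotv w p) -> Init w (conv S) x.
Proof.
move=> xS H; split; first exact: conv_mem.
move=> y [lam [H0 H1 ->]]; rewrite dotv_sum.
apply: (@le_trans _ _ (\sum_(j < size S) lam j * dotv w x)).
  by rewrite -big_distrl /= H1 mul1r.
apply: ler_sum => j _; apply: ler_wpM2l => //; apply: H; exact: mem_nth.
Qed.

Lemma init_pts k i (w : 'rV[R]_(2 * k)) x : x \in Ppts R k i ->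
  dotv w x <= 0 ->
  (forall m : 'I_(2 * k), odd m ->
     dotv w x <= (if odd i then ((i.-1) %/ 2)%N else (i %/ 2)%N)%:R * w 0 m) ->
  (forall m : 'I_(2 * k), ~~ odd m -> dotv w x <= i%:R * w 0 m) ->
  Init w (@Ppol R k i) x.
Proof.
move=> xS H0 Ho He; apply: init_of => // p.
rewrite /Ppts inE mem_cat => /orP[/eqP->|/orP[/mapP[m]|/mapP[m]]].
- by rewrite dotv0.
- by rewrite mem_filter => /andP[Hm _] ->; rewrite dotv_unit; apply: Ho.
- by rewrite mem_filter => /andP[Hm _] ->; rewrite dotv_unit; apply: He.
Qed.

Lemma qseg_mem k (j : 'I_(2 * k)) x :
  x \in [:: 0; (if odd j.+1 then j.+1%:R else (j.+1 %/ 2)%N%:R) *: unitv R j] ->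
  Qseg j x.
Proof. exact: conv_mem. Qed.

End Helpers.

Theorem mainTheorem4 (R : realType) (k : nat) (hk : (1 <= k)%N)
  (w : 'rV[R]_(2 * k)) (hw : w != 0) :
  exists j : 'I_(2 * k), exists x : 'rV[R]_(2 * k),
    Qseg j x /\ Init w (@Ppol R k j.+1) x.
Proof.
have h0 : (0 < 2 * k)%N by rewrite muln_gt0.
have h1 : (1 < 2 * k)%N by rewrite mul2n -addnn; exact: (leq_add hk hk).
case: (boolP [forall m, 0 <= w 0 m]) => [/forallP Hpos|Hneg].
  exists (Ordinal h0), 0; split; first by apply: qseg_mem; rewrite inE eqxx.
  apply: init_pts; rewrite ?dotv0 //.
  - by rewrite /Ppts inE eqxx.
  - by move=> m _; rewrite mulr_ge0.
  - by move=> m _; rewrite mulr_ge0.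
have [a Ha HA] := @ex_argmin R _ (fun m : 'I_(2 * k) => ~~ odd m) (fun m => w 0 m) (Ordinal h0) isT.
have [b Hb HB] := @ex_argmin R _ (fun m : 'I_(2 * k) => odd m) (fun m => w 0 m) (Ordinal h1) isT.
move: Ha Hb HA HB => /= Ha Hb HA HB.
have [Hb2 | Hb2] := boolP ((w 0 b <= 2 * w 0 a) && (w 0 b < 0)).
  case/andP: Hb2 => Hb2 Hbn.
  set c : nat := (b.+1 %/ 2)%N.
  have Hc : (b.+1 = c * 2)%N by rewrite /c divnK // dvdn2 /= Hb.
  exists b, (c%:R *: unitv R b); split.
    by apply: qseg_mem; rewrite /= Hb /= !inE eqxx orbT.
  apply: init_pts; rewrite ?dotv_unit /= ?Hb /=.
  - rewrite /Ppts /= Hb /= inE mem_cat; apply/orP; right; apply/orP; left.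
    by apply: map_f; rewrite mem_filter Hb mem_enum.
  - by rewrite mulr_ge0_le0 // ltW.
  - by move=> m Hm; rewrite ler_wpM2l // HB.
  - move=> m Hm; have := HA m Hm; rewrite Hc natrM.
    have : 0 <= c%:R :> R by [].
    move=> Hc0 Ham; nra.
have Hc : (a : nat) = (a %/ 2 * 2)%N by rewrite divnK // dvdn2.
set c : nat := (a %/ 2)%N.
have Han : w 0 a < 0.
  rewrite ltNge; apply/negP => Ha0; move/negP: Hneg; apply; apply/forallP => m.
  case: (boolP (odd m)) => Hm; last by apply: le_trans Ha0 (HA m Hm).
  rewrite negb_and -!ltNge in Hb2.
  case/orP: Hb2 => Hb2; apply: le_trans (HB m Hm); lra.
exists a, (a.+1%:R *: unitv R a); split.
  by apply: qseg_mem; rewrite /= Ha /= !inE eqxx orbT.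
apply: init_pts; rewrite ?dotv_unit /= ?Ha /=.
- rewrite /Ppts /= Ha /= inE mem_cat; apply/orP; right; apply/orP; right.
  by apply: map_f; rewrite mem_filter Ha mem_enum.
- by rewrite mulr_ge0_le0 // ltW.
- move=> m Hm; have := HB m Hm; rewrite negb_and -!ltNge in Hb2.
  have Hc0 : 0 <= c%:R :> R by [].
  have Ha2 : a%:R = c%:R * 2 :> R by rewrite {1}Hc natrM.
  rewrite -/c; move=> Hbm; rewrite -addn1 natrD Ha2.
  case/orP: Hb2 => Hb2; nra.
- by move=> m Hm; rewrite ler_wpM2l // HA.
Qed.
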